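(* Let $S$ be a semigroup, let $a\in S$, and define $P=\{x\in Sa : x\,\mathscr L\, ax\}$. If $aSa\subseteq\operatorname{Reg}(S)$, then $P\subseteq\operatorname{Reg}(S)$; consequently, in this case $\operatorname{Reg}(Sa)=P$, and this set is a right ideal of the semigroup $Sa$ (i.e. $xy\in P$ for all $x\in P$, $y\in Sa$).
   Context: $Sa=\{xa:x\in S\}$, $aSa=\{axa:x\in S\}$. For a semigroup $T$, $\operatorname{Reg}(T)=\{x\in T: x=xyx \text{ for some } y\in T\}$. $\mathscr L$ is Green's $\mathscr L$-relation on $S$: $x\,\mathscr L\,y$ iff $S^1x=S^1y$, $S^1$ being $S$ with an identity adjoined if necessary. *)

(* Defs.v *)
Section SemigroupDefs.
Variable S : Type.
Variable mul : S -> S -> S.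

Definition Sa (a : S) (x : S) : Prop := exists s, x = mul s a.

Definition aSa (a : S) (z : S) : Prop := exists x, z = mul (mul a x) a.

Definition RegIn (T : S -> Prop) (x : S) : Prop :=
  T x /\ exists y, T y /\ x = mul (mul x y) x.

Definition Reg (x : S) : Prop := RegIn (fun _ => True) x.

Definition S1 (x : S) (z : S) : Prop := z = x \/ exists s, z = mul s x.

Definition GreenL (x y : S) : Prop := forall z, S1 x z <-> S1 y z.

Definition Pset (a : S) (x : S) : Prop := Sa a x /\ GreenL x (mul a x).

End SemigroupDefs.

Arguments Sa {S} mul a x.
Arguments aSa {S} mul a z.
Arguments RegIn {S} mul T x.
Arguments Reg {S} mul x.
Arguments S1 {S} mul x z.
Arguments GreenL {S} mul x y.
Arguments Pset {S} mul a x.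

(* Main.v *)
Require Import Defs.
From Stdlib Require Import Setoid.

Section H.
Variable S : Type.
Variable mul : S -> S -> S.
Hypothesis assoc : forall x y z : S, mul x (mul y z) = mul (mul x y) z.

Lemma S1_trans x y z : S1 mul x y -> S1 mul y z -> S1 mul x z.
Proof.
  intros [->|[s ->]] [->|[t ->]].
  - left; auto.
  - right; exists t; auto.
  - right; exists s; auto.
  - right; exists (mul t s); rewrite assoc; auto.
Qed.

Lemma GL_intro x y : S1 mul y x -> S1 mul x y -> GreenL mul x y.
Proof.
  intros h1 h2 z; split; intro h; eapply S1_trans; eauto.
Qed.

Lemma GL_elim x y : GreenL mul x y -> S1 mul y x.
Proof. intros h; apply h; left; auto. Qed.

Lemma key a (haSa : forall z, aSa mul a z -> Reg mul z) x :
  Pset mul a x -> exists y, x = mul (mul x (mul y a)) x.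
Proof.
  intros [[s Hs] HL].
  assert (R : Reg mul (mul a x)).
  { apply haSa; exists s; rewrite Hs, assoc; auto. }
  destruct R as [_ [y [_ Hy]]].
  exists y.
  destruct (GL_elim _ _ HL) as [Hx|[u Hu]].
  - rewrite <- Hx in Hy. rewrite assoc, <- (assoc (mul x y) a x), <- Hx. exact Hy.
  - rewrite assoc, <- (assoc (mul x y) a x).
    set (w := mul a x) in *. rewrite Hu at 1 2. rewrite <- !assoc.
    rewrite (assoc w y w). rewrite <- Hy. reflexivity.
Qed.
End H.

Theorem corollary3p3 (S : Type) (mul : S -> S -> S)
  (assoc : forall x y z : S, mul x (mul y z) = mul (mul x y) z)
  (a : S)
  (haSa : forall z, aSa mul a z -> Reg mul z) :
  (forall x, Pset mul a x -> Reg mul x) /\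
  (forall x, RegIn mul (Sa mul a) x <-> Pset mul a x) /\
  (forall x y, Pset mul a x -> Sa mul a y -> Pset mul a (mul x y)).
Proof.
  split; [|split].
  - intros x Hx. destruct (key S mul assoc a haSa x Hx) as [y Hy].
    split; [exact I|]. exists (mul y a); split; [exact I|exact Hy].
  - intro x; split.
    + intros [Hx [y [[t Ht] Hy]]]. split; [exact Hx|].
      apply (GL_intro S mul assoc).
      * right. exists (mul x t). rewrite Hy at 1. rewrite Ht.
        rewrite !assoc; reflexivity.
      * right. exists a; reflexivity.
    + intros Hx. destruct (key S mul assoc a haSa x Hx) as [y Hy].
      split; [exact (proj1 Hx)|]. exists (mul y a); split; [exists y; auto|exact Hy].
  - intros x y [[s Hs] HL] [t Ht]. split.
    + exists (mul x t). rewrite Ht, assoc; auto.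
    + apply (GL_intro S mul assoc).
      * assert (H := GL_elim S mul x (mul a x) HL).
        apply (S1_trans S mul assoc _ (mul (mul a x) y)).
        -- left. rewrite assoc; auto.
        -- destruct H as [H|[u H]].
           ++ left. rewrite <- H; auto.
           ++ right. exists u. rewrite H at 1. rewrite !assoc; auto.
      * right. exists a; reflexivity.
Qed.
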